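(* Status injective trees are status unique in trees: if $T$ is a tree whose vertices have pairwise distinct status values, and $T'$ is any tree with $\sigma(T')=\sigma(T)$, then $T'$ is isomorphic to $T$.
   Context: All graphs are finite, simple and connected. For a connected graph $G=(V,E)$ and $v\in V$, the status of $v$ is $s(v)=\sum_{u\in V} d(v,u)$, where $d$ is the shortest-path distance. The status sequence $\sigma(G)$ is the list of the statuses of all vertices of $G$ arranged in nondecreasing order. A connected graph is status injective if the statuses of its vertices are pairwise distinct. *)

(* Defs.v *)
From mathcomp Require Import all_boot.
Set Implicit Arguments. Unset Strict Implicit. Unset Printing Implicit Defensive.

Section Graphs.
Variable V : finType.
Implicit Types (e : rel V).

Definition simple_graph e := symmetric e /\ irreflexive e.

Definition connected_graph e := forall x y : V, connect e x y.

Definition acyclic e :=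
  forall c : seq V, uniq c -> 3 <= size c -> ~~ cycle e c.

Definition is_tree e := [/\ simple_graph e, connected_graph e & acyclic e].

Definition walk_of_length e (x y : V) (n : nat) : bool :=
  [exists p : n.-tuple V, path e x p && (last x p == y)].

(* shortest-path distance: least n with a walk of length n from x to y
   (in a connected graph such an n is < #|V|) *)
Definition dist e (x y : V) : nat :=
  find (walk_of_length e x y) (iota 0 #|V|).

Definition status e (v : V) : nat := \sum_(u : V) dist e v u.

Definition status_seq e : seq nat := sort leq [seq status e v | v <- enum V].

Definition status_injective e := injective (status e).

End Graphs.

Definition isomorphic (V W : finType) (e : rel V) (f : rel W) : Prop :=
  exists phi : V -> W, bijective phi /\ forall x y, f (phi x) (phi y) = e x y.

(* Main.v *)
Require Import Defs.
From mathcomp Require Import all_boot zify.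
Set Implicit Arguments. Unset Strict Implicit. Unset Printing Implicit Defensive.

Fixpoint Nf (S : seq nat) (k a : nat) : nat :=
  if k is k'.+1 then
    (\sum_(b <- S | (a < b) && (a + size S == b + (Nf S k' b).*2)) Nf S k' b).+1
  else 1.

Definition Echar (S : seq nat) (a b : nat) : bool :=
  ((b < a) && (b + size S == a + (Nf S (size S) a).*2)) ||
  ((a < b) && (a + size S == b + (Nf S (size S) b).*2)).

Section Tree.
Variables (V : finType) (e : rel V).
Hypothesis esym : symmetric e.
Hypothesis eirr : irreflexive e.
Hypothesis econ : connected_graph e.
Hypothesis eacy : acyclic e.

Local Notation d := (dist e).

Lemma walkP x y k :
  reflect (exists p : seq V, [/\ size p = k, path e x p & last x p = y])
          (walk_of_length e x y k).
Proof.
apply: (iffP existsP) => [[p /andP[h1 /eqP h2]] | [p [sz h1 h2]]].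
  by exists (val p); rewrite size_tuple.
have szk : size p == k by rewrite sz.
by exists (Tuple szk); rewrite /= h1 h2 eqxx.
Qed.

Lemma dist_le x y k : walk_of_length e x y k -> d x y <= k.
Proof.
move=> W; rewrite /dist.
case: (ltnP k #|V|) => hk; last first.
  by apply: leq_trans (find_size _ _) _; rewrite size_iota.
rewrite leqNgt; apply/negP => /(before_find 0).
by rewrite nth_iota // add0n W.
Qed.

Lemma dist_walk x y : walk_of_length e x y (d x y).
Proof.
have hh : has (walk_of_length e x y) (iota 0 #|V|).
  have /connectP [p pp lp] := econ x y.
  rewrite lp; case: (shortenP pp) => p' pp' up' _.
  apply/hasP; exists (size p').
    rewrite mem_iota add0n /=.
    have := max_card (mem (x :: p')).
    by move/card_uniqP: up' => ->.
  by apply/walkP; exists p'.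
have := nth_find 0 hh.
have hf : find (walk_of_length e x y) (iota 0 #|V|) < #|V|.
  by rewrite -{2}(size_iota 0 #|V|) -has_find.
by rewrite nth_iota // add0n.
Qed.

Lemma dist_xx x : d x x = 0.
Proof.
apply/eqP; rewrite -leqn0; apply: dist_le; apply/walkP; by exists [::].
Qed.

Lemma dist0 x y : d x y = 0 -> x = y.
Proof.
move=> h; have /walkP [p [sz _ lp]] := dist_walk x y.
by move: sz lp; rewrite h; case: p.
Qed.

Lemma dist_edge u v w : e u v -> d u w <= (d v w).+1.
Proof.
move=> euv; apply: dist_le.
have /walkP [p [sz pp lp]] := dist_walk v w.
by apply/walkP; exists (v :: p); rewrite /= sz euv pp lp.
Qed.

Lemma dist_step x z k : d x z = k.+1 -> exists y, e x y /\ d y z = k.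
Proof.
move=> h; have /walkP [p [sz pp lp]] := dist_walk x z.
move: sz pp lp; rewrite h; case: p => [//|y p] /= [sz] /andP[exy py] ly.
exists y; split => //.
have h1 : d y z <= k by apply: dist_le; apply/walkP; exists p.
have := dist_edge z exy; rewrite h; lia.
Qed.

Lemma keyK k : forall a b w, a != b -> d a w = k -> d b w = k ->
  exists s, [/\ path e a s, last a s = b, uniq (a :: s), 3 <= size (a :: s)
             & forall v, v \in a :: s -> d v w <= k].
Proof.
elim: k => [|k IH] a b w ab da db.
  by move: ab; rewrite (dist0 da) (dist0 db) eqxx.
have [a' [ea da']] := dist_step da.
have [b' [eb db']] := dist_step db.
have aa' : a != a' by apply/eqP => h; move: da; rewrite h da'; lia.
case: (eqVneq a' b') => [ab'|ab'].
  subst b'.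
  exists [:: a'; b]; split => //=.
  - by rewrite ea esym eb.
  - rewrite !inE negb_or aa' ab /= andbT; apply/eqP => h; move: db; rewrite -h da'; lia.
  - move=> v; rewrite !inE => /or3P [] /eqP ->; rewrite ?da ?da' ?db //; lia.
have [s [ps ls us ss ds]] := IH _ _ _ ab' da' db'.
exists (rcons (a' :: s) b); split.
- by rewrite rcons_path /= ea ps ls esym eb.
- by rewrite last_rcons.
- have nin v : d v w = k.+1 -> v \notin a' :: s.
    by move=> hv; apply/negP => /ds; rewrite hv; lia.
  have := nin a da; have := nin b db; move: us => /= /andP[a's us].
  rewrite !inE !negb_or => /andP[nba' nbs] /andP[naa' nas].
  rewrite -cats1 cat_uniq /= mem_cat !inE !negb_or ?orbF.
  by rewrite nas us nbs naa' ab /= mem_cat inE negb_or a's eq_sym nba'.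
- by rewrite /= size_rcons; move: ss => /=; lia.
- move=> v; rewrite inE mem_rcons inE => /or3P [/eqP ->|/eqP ->|/ds]; 
  rewrite ?da ?db //; lia.
Qed.

Lemma no_equal_edge u v w : e u v -> d u w != d v w.
Proof.
move=> euv; apply/negP => /eqP h.
have uv : u != v by apply/eqP => h'; move: euv; rewrite h' eirr.
have [s [ps ls us ss _]] := keyK uv h (erefl _).
have := eacy us ss; rewrite /= rcons_path ps ls esym euv.
done.
Qed.

Lemma uniq_step x c1 c2 w k : e x c1 -> e x c2 -> d c1 w = k -> d c2 w = k ->
  d x w = k.+1 -> c1 = c2.
Proof.
move=> e1 e2 d1 d2 dx; apply/eqP; apply/negPn/negP => c12.
have [s [ps ls us ss ds]] := keyK c12 d1 d2.
have ux : uniq (x :: c1 :: s).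
  rewrite cons_uniq us andbT; apply/negP => /ds; rewrite dx; lia.
have := eacy ux (leq_trans ss (leqnSn _)).
by rewrite /= rcons_path e1 ps ls esym e2.
Qed.

Lemma G1 u v w : e u v -> d u w = (d v w).+1 \/ d v w = (d u w).+1.
Proof.
move=> euv; have h1 := dist_edge w euv.
have h2 := dist_edge w (etrans (esym v u) euv).
have := no_equal_edge w euv; move/eqP; lia.
Qed.


Local Notation s := (status e).
Definition C x y := [set w | d x w < d y w].

Lemma card_sum (A : {set V}) : #|A| = \sum_w (w \in A : nat).
Proof. by rewrite -sum1_card big_mkcond; apply: eq_bigr => w _; case: (w \in A). Qed.

Lemma statusE u v : e u v -> s u + #|C u v| = s v + #|C v u|.
Proof.
move=> euv; rewrite !card_sum /status -!big_split /=.
apply: eq_bigr => w _; rewrite !inE.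
case: (G1 w euv) => ->; rewrite ?ltnn ?leqnn /= ?ltnS ?leqnn ?ltnn /=; lia.
Qed.

Lemma Ccompl u v : e u v -> #|C u v| + #|C v u| = #|V|.
Proof.
move=> euv; have -> : C v u = ~: C u v.
  apply/setP => w; rewrite !inE; case: (G1 w euv) => ->; lia.
exact: cardsC.
Qed.

Lemma key_id x y : e x y -> s y + #|V| = s x + (#|C x y|).*2.
Proof.
move=> exy; have h1 := statusE (etrans (esym y x) exy); have h2 := Ccompl exy.
rewrite -addnn; lia.
Qed.

Lemma G2 x y : e x y ->
  #|C x y| = (\sum_(c | e x c && (c != y)) #|C c x|).+1.
Proof.
move=> exy.
have pw w : (w \in C x y : nat) =
    (w == x) + \sum_(c | e x c && (c != y)) (w \in C c x : nat).
  case: (eqVneq w x) => [->|wx].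
    rewrite big1 => [|c _]; last by rewrite inE dist_xx.
    rewrite inE dist_xx lt0n /= addn0; case: (eqVneq (d y x) 0) => // /dist0 yx.
    by move: exy; rewrite yx eirr.
  case hk: (d x w) => [|k]; first by move: wx; rewrite (dist0 hk) eqxx.
  have [c0 [ec0 dc0]] := dist_step hk.
  rewrite add0n inE hk.
  case: ltnP => hy.
    have c0y : c0 != y by apply/eqP => h; move: hy; rewrite -h dc0; lia.
    rewrite (bigD1 c0) /=; last by rewrite ec0 c0y.
    rewrite inE dc0 hk ltnSn big1 // => c /andP[/andP[ec cy] cc0].
    rewrite inE hk; apply/eqP; rewrite eqb0 -leqNgt; apply/negP => hc.
    case: (G1 w ec); rewrite hk => h; last by lia.
    have dck : d c w = k by move: hc h; lia.
    by move/eqP: cc0; apply; apply: (uniq_step ec ec0 dck dc0 hk).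
  rewrite big1 // => c /andP[ec cy].
  rewrite inE hk; apply/eqP; rewrite eqb0 -leqNgt; apply/negP => hc.
  have dyk : d y w = k by case: (G1 w exy); rewrite hk => h; lia.
  case: (G1 w ec); rewrite hk => h; last by lia.
  have dck : d c w = k by move: hc h; lia.
  by move/eqP: cy; apply; apply: (uniq_step ec exy dck dyk hk).
rewrite card_sum (eq_bigr _ (fun w _ => pw w)) big_split /=.
rewrite (bigD1 x) //= eqxx big1 => [|w /negbTE ->] //.
rewrite exchange_big /= addn0 add1n; congr _.+1.
by apply: eq_bigr => c _; rewrite card_sum.
Qed.

Lemma lower_disj x y1 y2 : e x y1 -> e x y2 -> y1 != y2 ->
  #|C y1 x| + #|C y2 x| <= #|V|.
Proof.
move=> e1 e2 y12.
have -> : #|C y1 x| + #|C y2 x| = #|C y1 x :|: C y2 x|.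
  rewrite cardsU; have -> : C y1 x :&: C y2 x = set0.
    apply/setP => w; rewrite !inE; apply/negP => /andP[h1 h2].
    case hk: (d x w) h1 h2 => [|k]; first by [].
    move=> h1 h2.
    have k1 : d y1 w = k by case: (G1 w e1); rewrite hk => h; lia.
    have k2 : d y2 w = k by case: (G1 w e2); rewrite hk => h; lia.
    by move/eqP: y12; apply; apply: (uniq_step e1 e2 k1 k2 hk).
  by rewrite cards0 subn0.
exact: max_card.
Qed.

Lemma one_lower x y1 y2 : e x y1 -> e x y2 -> s y1 < s x -> s y2 < s x -> y1 = y2.
Proof.
move=> e1 e2 l1 l2; apply/eqP; apply/negPn/negP => y12.
have := lower_disj e1 e2 y12.
have := key_id e1; have := key_id e2.
have := Ccompl e1; have := Ccompl e2.
rewrite -!addnn; lia.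
Qed.

Lemma Lgrow k : forall x y z, e x y -> s x < s y -> z \in C y x -> d y z = k ->
  s x < s z.
Proof.
elim: k => [|k IH] x y z exy sxy zC dyz.
  by rewrite -(dist0 dyz).
have [y2 [ey2 dy2]] := dist_step dyz.
have dxz : d x z = k.+2.
  by move: zC; rewrite inE dyz; case: (G1 z exy); rewrite dyz => h; lia.
have y2x : y2 != x by apply/eqP => h; move: dy2; rewrite h dxz; lia.
have eyx : e y x by rewrite esym.
have hg := G2 eyx.
rewrite (bigD1 y2) /= in hg; last by rewrite ey2 y2x.
have k1 := key_id eyx. have k2 := key_id (etrans (esym y2 y) ey2).
have syy2 : s y < s y2 by move: hg k1 k2 sxy; rewrite -!addnn; lia.
apply: ltn_trans sxy (IH y y2 z ey2 syy2 _ dy2).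
by rewrite inE dy2 dyz.
Qed.

Hypothesis sinj : injective s.

Lemma lower_exists x z : s z < s x -> exists y, e x y /\ s y < s x.
Proof.
move=> szx.
case: (boolP [exists y, e x y && (s y < s x)]) => [/existsP[y /andP[h1 h2]]|/existsPn H].
  by exists y.
exfalso.
have zx : z != x by apply/eqP => h; move: szx; rewrite h ltnn.
case hk: (d x z) => [|k]; first by move: zx; rewrite (dist0 hk) eqxx.
have [y [exy dyz]] := dist_step hk.
have sxy : s x < s y.
  have := H y; rewrite exy /= -leqNgt leq_eqVlt => /orP[/eqP h|//].
  by move: exy; rewrite (sinj h) eirr.
have := Lgrow exy sxy _ dyz; rewrite inE dyz hk ltnSn => /(_ isT).
by rewrite ltnNge (ltnW szx).
Qed.


Local Notation S := (status_seq e).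

Lemma size_S : size S = #|V|.
Proof. by rewrite size_sort size_map -cardE. Qed.

Lemma Nf_correct k : forall x y, e x y -> s y < s x ->
  #|[set z | s x < s z]| < k -> Nf S k (s x) = #|C x y|.
Proof.
elim: k => [//|k IH] x y exy syx hk /=.
rewrite (G2 exy); congr _.+1.
have bnd v : s x < s v -> #|[set z | s v < s z]| < k.
  move=> hv; have : [set z | s v < s z] \proper [set z | s x < s z].
    apply/properP; split.
      by apply/subsetP => z; rewrite !inE => h; apply: ltn_trans hv h.
    by exists v; rewrite !inE ?ltnn.
  by move/proper_card => h; apply: leq_trans h _; rewrite -ltnS.
have pred_eq v : (s x < s v) && (s x + size S == s v + (Nf S k (s v)).*2)
                 = e x v && (v != y).
  rewrite size_S; apply/idP/idP.
    move=> /andP[hv /eqP heq].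
    have [y' [evy' sy']] := lower_exists hv.
    have h1 := IH v y' evy' sy' (bnd v hv).
    have h2 := key_id evy'.
    have sy'x : s y' = s x by move: heq h2; rewrite h1; lia.
    rewrite -(sinj sy'x) esym evy' /=.
    by apply/eqP => h; move: hv syx; rewrite h; lia.
  move=> /andP[exv vy].
  have hv : s x < s v.
    rewrite ltnNge leq_eqVlt; apply/negP => /orP[/eqP h|h].
      by move: exv; rewrite (sinj h) eirr.
    by move/eqP: vy; apply; rewrite (one_lower exy exv syx h).
  have evx : e v x by rewrite esym.
  rewrite hv (IH v x evx hv (bnd v hv)) /=.
  by apply/eqP; apply: key_id.
have pS : perm_eq S (map s (enum V)) by rewrite /status_seq perm_sort.
rewrite (perm_big _ pS) big_map big_enum_cond /=.
apply: eq_big => [v|v]; first by rewrite pred_eq.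
move=> hP; have /andP[exv _] : e x v && (v != y) by rewrite -pred_eq.
move/andP: hP => [hv _].
have evx : e v x by rewrite esym.
exact: IH v x evx hv (bnd v hv).
Qed.

Lemma Nx x y : e x y -> s y < s x -> Nf S (size S) (s x) = #|C x y|.
Proof.
move=> exy syx; apply: Nf_correct => //; rewrite size_S.
rewrite -cardsT; apply: proper_card; apply/properP; split; first exact: subsetT.
by exists x; rewrite !inE ?ltnn.
Qed.

Lemma edge_char x y : e x y = Echar S (s x) (s y).
Proof.
rewrite /Echar; apply/idP/idP.
  move=> exy; case: (ltngtP (s x) (s y)) => h.
  - have eyx : e y x by rewrite esym.
    by apply/orP; right; rewrite ?h (Nx eyx h) size_S /=; apply/eqP; apply: key_id.
  - by apply/orP; left; rewrite ?h (Nx exy h) size_S /=; apply/eqP; apply: key_id.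
  - by move: exy; rewrite (sinj h) eirr.
case/orP => /andP[h /eqP heq].
  have [y' [exy' sy']] := lower_exists h.
  move: heq; rewrite (Nx exy' sy') size_S -(key_id exy') => heq.
  have : s y' = s y by lia.
  by move/sinj <-.
have [y' [exy' sy']] := lower_exists h.
move: heq; rewrite (Nx exy' sy') size_S -(key_id exy') => heq.
have : s y' = s x by lia.
by move/sinj => <-; rewrite esym.
Qed.

End Tree.

Lemma uniq_map_inj (T : finType) (g : T -> nat) :
  uniq (map g (enum T)) -> injective g.
Proof. by move=> u; apply/injectiveP. Qed.

Unset Implicit Arguments.

Theorem theorem3p1 (V : finType) (e : rel V) (W : finType) (f : rel W) :
  is_tree e -> status_injective e ->
  is_tree f -> status_seq f = status_seq e ->
  isomorphic f e.
Proof.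
move=> [[esym eirr] econ eacy] sinj [[fsym firr] fcon facy] Seq.
have ue : uniq (status_seq e).
  by rewrite sort_uniq map_inj_uniq ?enum_uniq.
have finj : injective (status f).
  by apply: uniq_map_inj; rewrite -(sort_uniq leq) -/(status_seq f) Seq.
have H x : exists v : V, status e v == status f x.
  have : status f x \in status_seq e.
    by rewrite -Seq mem_sort map_f // mem_enum.
  by rewrite mem_sort => /mapP [v _ ->]; exists v.
pose phi x := xchoose (H x).
have phiE x : status e (phi x) = status f x by apply/eqP; apply: (xchooseP (H x)).
exists phi; split.
  apply: inj_card_bij.
    by move=> a b hab; apply: finj; rewrite -!phiE hab.
  by rewrite -(size_S e) -(size_S f) Seq.
move=> x y.
rewrite (edge_char esym eirr econ eacy sinj) (edge_char fsym firr fcon facy finj).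
by rewrite !phiE Seq.
Qed.
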